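(* For every nonempty graph $G$ and all integers $s,t\ge 1$, \[\hat r((s+t)K_2,G)\le \hat r(sK_2,G)+\hat r(tK_2,G).\]
   Context: All graphs are finite and simple; a graph is nonempty if it has at least one edge. $tK_2$ denotes a matching with $t$ edges (disjoint union of $t$ copies of $K_2$). For graphs $F,G,H$, $F\to(G,H)$ means every red--blue coloring of $E(F)$ contains a red copy of $G$ or a blue copy of $H$, and $\hat r(G,H)=\min\{|E(F)|:F\to(G,H)\}$. *)

(* Defs.v *)
From mathcomp Require Import all_boot.
From Stdlib Require ClassicalEpsilon.
Set Implicit Arguments. Unset Strict Implicit. Unset Printing Implicit Defensive.

Record sgraph := SGraph {
  vert : finType;
  adj : rel vert;
  adj_sym : symmetric adj;
  adj_irr : irreflexive adj }.

Definition nedges (F : sgraph) : nat :=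
  (#|[set p : vert F * vert F | adj p.1 p.2]|)./2.

Definition nonempty_graph (G : sgraph) : Prop :=
  exists x y : vert G, adj x y.

(* the matching tK_2 : vertices (i, b) with i < t, b : bool; edges (i,false)-(i,true) *)
Definition matching_adj (t : nat) : rel ('I_t * bool) :=
  fun p q => (p.1 == q.1) && (p.2 != q.2).
Arguments matching_adj t : clear implicits.

Lemma matching_adj_sym (n : nat) : symmetric (matching_adj n).
Proof. by move=> [i a] [j b]; rewrite /matching_adj /= eq_sym [b == a]eq_sym. Qed.

Lemma matching_adj_irr (n : nat) : irreflexive (matching_adj n).
Proof. by move=> [i a]; rewrite /matching_adj /= !eqxx. Qed.

Definition matching (t : nat) : sgraph :=
  @SGraph ('I_t * bool)%type (matching_adj t)
          (@matching_adj_sym t) (@matching_adj_irr t).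

Definition has_copy (F G : sgraph) (col : vert F -> vert F -> bool) : Prop :=
  exists f : vert G -> vert F, injective f /\
    forall x y : vert G, adj x y -> adj (f x) (f y) && col (f x) (f y).

(* F -> (G, H): every red/blue colouring of E(F) (c x y = true means red;
   c symmetric so that it is a colouring of the edges) has a red G or a blue H. *)
Definition arrows (F G H : sgraph) : Prop :=
  forall c : rel (vert F), symmetric c ->
    has_copy G c \/ has_copy H (fun x y => ~~ c x y).

Definition size_ramsey_cand (G H : sgraph) (m : nat) : Prop :=
  exists F : sgraph, nedges F = m /\ arrows F G H.

Definition size_ramsey (G H : sgraph) : nat :=
  ClassicalEpsilon.epsilon (inhabits 0%N) (fun m => size_ramsey_cand G H m /\
                             forall k, size_ramsey_cand G H k -> m <= k).

(* Main.v *)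
Require Import Defs.
From mathcomp Require Import all_boot.
From Stdlib Require Classical ClassicalEpsilon.
Set Implicit Arguments. Unset Strict Implicit. Unset Printing Implicit Defensive.

Lemma prop_min (P : nat -> Prop) :
  (exists n, P n) -> exists m, P m /\ forall k, P k -> m <= k.
Proof.
case=> n; elim: n {-2}n (leqnn n) => [|n IH] k.
  rewrite leqn0 => /eqP -> P0; exists 0; split => //.
move=> kn Pk.
case: (Classical_Prop.classic (exists j, j < k /\ P j)).
  case=> j [jk Pj]; apply: (IH j) => //; exact: leq_trans jk kn.
move=> H; exists k; split => // j Pj.
rewrite leqNgt; apply/negP => jk; apply: H; by exists j.
Qed.

Lemma sr_min (G H : sgraph) k :
  size_ramsey_cand G H k -> size_ramsey G H <= k.
Proof.
move=> Pk.
have ex : exists m, size_ramsey_cand G H m /\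
    forall k, size_ramsey_cand G H k -> m <= k by apply: prop_min; exists k.
have := ClassicalEpsilon.epsilon_spec (inhabits 0) _ ex.
by rewrite /size_ramsey => -[_]; apply.
Qed.

Lemma sr_spec (G H : sgraph) k :
  size_ramsey_cand G H k -> size_ramsey_cand G H (size_ramsey G H).
Proof.
move=> Pk.
have ex : exists m, size_ramsey_cand G H m /\
    forall k, size_ramsey_cand G H k -> m <= k by apply: prop_min; exists k.
have := ClassicalEpsilon.epsilon_spec (inhabits 0) _ ex.
by rewrite /size_ramsey => -[].
Qed.

Section Union.
Variables F1 F2 : sgraph.

Definition uadj : rel (vert F1 + vert F2)%type := fun u v =>
  match u, v with
  | inl x, inl y => adj x y
  | inr x, inr y => adj x y
  | _, _ => false end.

Lemma uadj_sym : symmetric uadj.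
Proof. by case=> x [] y //=; rewrite adj_sym. Qed.
Lemma uadj_irr : irreflexive uadj.
Proof. by case=> x /=; rewrite adj_irr. Qed.

Definition union := @SGraph (vert F1 + vert F2)%type uadj uadj_sym uadj_irr.

End Union.

Definition eset (F : sgraph) := [set p : vert F * vert F | adj p.1 p.2].

Lemma eset_even (F : sgraph) : ~~ odd #|eset F|.
Proof.
set A := [set p : vert F * vert F | adj p.1 p.2 && (enum_rank p.1 < enum_rank p.2)].
set B := [set p : vert F * vert F | adj p.1 p.2 && (enum_rank p.2 < enum_rank p.1)].
pose sw := fun p : vert F * vert F => (p.2, p.1).
have swK : cancel sw sw by case.
have eB : B = sw @: A.
  rewrite (can_imset_pre _ swK); apply/setP => -[x y]; rewrite !inE /= adj_sym //.
have cB : #|B| = #|A| by rewrite eB card_imset //; exact: can_inj swK.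
have eS : eset F = A :|: B.
  apply/setP => -[x y]; rewrite !inE /=.
  case exy: (adj x y) => //=.
  case: (ltngtP (enum_rank x) (enum_rank y)) => // /val_inj /enum_rank_inj e.
  by move: exy; rewrite e adj_irr.
have eI : A :&: B = set0.
  apply/setP => -[x y]; rewrite !inE /=.
  by case: (adj x y) => //=; case: ltngtP.
rewrite eS cardsU eI cards0 subn0 cB addnn odd_double //.
Qed.

Lemma nedges_union F1 F2 : nedges (union F1 F2) = nedges F1 + nedges F2.
Proof.
rewrite /nedges.
pose g1 := fun p : vert F1 * vert F1 => (inl p.1, inl p.2) : vert (union F1 F2) * vert (union F1 F2).
pose g2 := fun p : vert F2 * vert F2 => (inr p.1, inr p.2) : vert (union F1 F2) * vert (union F1 F2).
have i1 : injective g1 by move=> [a b] [c d] [-> ->].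
have i2 : injective g2 by move=> [a b] [c d] [-> ->].
have e : [set p : vert (union F1 F2) * vert (union F1 F2) | adj p.1 p.2] =
   g1 @: eset F1 :|: g2 @: eset F2.
  apply/setP => -[[x|x] [y|y]]; rewrite !inE /=.
  - rewrite (_ : (inl x, inl y) = g1 (x, y)) // mem_imset // inE.
    by case: imsetP => [[[? ?] _]|] //= _; rewrite orbF.
  - by apply/esym/norP; split; apply/imsetP => -[] [? ?] _; rewrite /g1 /g2 /= => -[].
  - by apply/esym/norP; split; apply/imsetP => -[] [? ?] _; rewrite /g1 /g2 /= => -[].
  - rewrite (_ : (inr x, inr y) = g2 (x, y)) // mem_imset // inE.
    by case: imsetP => [[[? ?] _]|] //; rewrite /g1 /g2 /= => -[].
have eI : g1 @: eset F1 :&: g2 @: eset F2 = set0.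
  apply/setP => p; rewrite !inE.
  by apply/andP => -[/imsetP [q _ ->] /imsetP [r _]].
rewrite e cardsU eI cards0 subn0 !card_imset // halfD.
by rewrite (negbTE (eset_even F1)).
Qed.

Lemma arrows_union F1 F2 G s t :
  arrows F1 (matching s) G -> arrows F2 (matching t) G ->
  arrows (union F1 F2) (matching (s + t)) G.
Proof.
move=> A1 A2 c csym.
have c1s : symmetric (fun x y : vert F1 => c (inl x) (inl y)) by move=> x y; apply: csym.
have c2s : symmetric (fun x y : vert F2 => c (inr x) (inr y)) by move=> x y; apply: csym.
case: (A1 _ c1s) => [[f1 [f1i f1e]]|[g [gi ge]]]; last first.
  right; exists (fun x => inl (g x) : vert (union F1 F2)); split.
    by move=> x y [] /gi.
  by move=> x y /ge.
case: (A2 _ c2s) => [[f2 [f2i f2e]]|[g [gi ge]]]; last first.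
  right; exists (fun x => inr (g x) : vert (union F1 F2)); split.
    by move=> x y [] /gi.
  by move=> x y /ge.
left.
pose f := fun p : 'I_(s + t) * bool =>
  match split p.1 with
  | inl j => inl (f1 (j, p.2))
  | inr j => inr (f2 (j, p.2)) end : vert (union F1 F2).
exists f; split.
  move=> [i a] [j b]; rewrite /f /=.
  case: splitP => i' ei; case: splitP => j' ej //.
    by case=> /f1i [e1 ->]; congr pair; apply: val_inj; rewrite /= ei ej e1.
  by case=> /f2i [e1 ->]; congr pair; apply: val_inj; rewrite /= ei ej e1.
move=> [i a] [j b]; rewrite /= /matching_adj /= => /andP [/eqP <- ab].
rewrite /f /=; case: (split i) => k /=.
  by apply: (f1e (k, a) (k, b)); rewrite /= /matching_adj /= eqxx.
by apply: (f2e (k, a) (k, b)); rewrite /= /matching_adj /= eqxx.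
Qed.

Lemma arrows_base G : arrows G (matching 1) G.
Proof.
move=> c csym.
case: (Classical_Prop.classic (exists x y, adj x y && c x y)).
  case=> x [y /andP [axy cxy]]; left.
  have nxy : x != y by apply/eqP => e; move: axy; rewrite e adj_irr.
  exists (fun p : 'I_1 * bool => if p.2 then y else x); split.
    move=> [i a] [j b] /=; rewrite !ord1.
    by case: a; case: b => // e; [move: nxy; rewrite e eqxx | move: nxy; rewrite e eqxx].
  move=> [i a] [j b]; rewrite /= /matching_adj /= => /andP [_].
  by case: a; case: b => //= _; rewrite ?axy ?cxy // adj_sym csym axy cxy.
move=> H; right; exists id; split => // x y axy; rewrite axy /=.
by apply/negP => cxy; apply: H; exists x, y; rewrite axy cxy.
Qed.

Lemma arrows_exists G s : exists F, arrows F (matching s.+1) G.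
Proof.
elim: s => [|s [F AF]]; first by exists G; apply: arrows_base.
exists (union F G); rewrite -addn1; apply: arrows_union => //; exact: arrows_base.
Qed.

Theorem proposition2p2 (G : sgraph) (s t : nat) :
  nonempty_graph G -> 1 <= s -> 1 <= t ->
  size_ramsey (matching (s + t)) G <=
    size_ramsey (matching s) G + size_ramsey (matching t) G.
Proof.
move=> _; case: s => // s _; case: t => // t _.
have [F1 [e1 A1]] : size_ramsey_cand (matching s.+1) G (size_ramsey (matching s.+1) G).
  have [F AF] := arrows_exists G s; apply: (@sr_spec _ _ (nedges F)); by exists F.
have [F2 [e2 A2]] : size_ramsey_cand (matching t.+1) G (size_ramsey (matching t.+1) G).
  have [F AF] := arrows_exists G t; apply: (@sr_spec _ _ (nedges F)); by exists F.
apply: sr_min; exists (union F1 F2); split.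
  by rewrite nedges_union e1 e2.
exact: arrows_union.
Qed.
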